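(* For a bipartite quantum channel $\mathcal N_{AB\to A'B'}$, $$\gamma_{\mathrm{PPT}}(\mathcal N_{AB\to A'B'})\ge 2^{LN_{\max}(\mathcal N_{AB\to A'B'})}-1.$$
   Context: All Hilbert spaces finite-dimensional; $\log$ base 2. Alice holds $A$, $A'$; Bob holds $B$, $B'$. The unnormalized Choi operator of $\mathcal M_{AB\to A'B'}$ is $J^{\mathcal M}_{ABA'B'}=\sum_{i,j}|i\rangle\langle j|_{AB}\otimes\mathcal M(|i\rangle\langle j|_{AB})$. A bipartite channel is PPT if $(J^{\mathcal M}_{ABA'B'})^{T_{BB'}}\ge0$. $\gamma_{\mathrm{PPT}}(\mathcal N)=\inf\{c_1+c_2:\mathcal N=c_1\mathcal M_1-c_2\mathcal M_2,\ c_i\ge0,\ \mathcal M_i\text{ PPT channels}\}$. The max-logarithmic negativity is $LN_{\max}(\mathcal N)=\log\inf\{\max\{\|P_{AB}\|_\infty,\|P_{AB}^{T_B}\|_\infty\}:\ -P_{ABA'B'}^{T_{BB'}}\le(J^{\mathcal N}_{ABA'B'})^{T_{BB'}}\le P_{ABA'B'}^{T_{BB'}},\ P_{ABA'B'}\ge0\}$ with $P_{AB}=\mathrm{tr}_{A'B'}P_{ABA'B'}$. *)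

(* Defs.v *)
From HB Require Import structures.
From mathcomp Require Import all_boot all_order all_algebra.
From mathcomp Require Import complex.
From mathcomp Require Import all_classical all_reals ereal exp.
Set Implicit Arguments. Unset Strict Implicit. Unset Printing Implicit Defensive.
Import Order.TTheory GRing.Theory Num.Theory.
Local Open Scope ring_scope.
Local Open Scope complex_scope.

Section QDefs.
Variable R : realType.
Local Notation C := R[i].

(* A linear operator on the finite-dimensional Hilbert space C^T, T a finite
   index set (computational basis), as its matrix of entries. *)
Definition op (T : finType) := T -> T -> C.

Definition opadd T (X Y : op T) : op T := fun i j => X i j + Y i j.
Definition opopp T (X : op T) : op T := fun i j => - X i j.
Definition opscale T (c : C) (X : op T) : op T := fun i j => c * X i j.
Definition opapply T (X : op T) (v : T -> C) : T -> C :=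
  fun i => \sum_j X i j * v j.

(* Positive semidefiniteness: <v, X v> >= 0 for every vector v
   (in C, "0 <= z" means z is real and nonnegative). *)
Definition psd T (X : op T) : Prop :=
  forall v : T -> C, 0 <= \sum_i \sum_j (v i)^* * X i j * v j.

Definition loewner T (X Y : op T) : Prop := psd (opadd Y (opopp X)).

Definition trace T (X : op T) : C := \sum_i X i i.

Definition vnormsq (T : finType) (v : T -> C) : C := \sum_i `|v i| ^+ 2.

Definition opnorm T (X : op T) : R :=
  inf [set c : R | (0 <= c)%R /\
        forall v : T -> C, vnormsq (opapply X v) <= (c%:C) ^+ 2 * vnormsq v].

Definition opmap (I O : finType) := op I -> op O.

Definition linear_map I O (M : opmap I O) : Prop :=
  forall (c : C) (X Y : op I), M (opadd (opscale c X) Y) = opadd (opscale c (M X)) (M Y).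

Definition ampl (n : nat) I O (M : opmap I O) (X : op ('I_n * I)%type) : op ('I_n * O)%type :=
  fun ro sp => M (fun i j => X (ro.1, i) (sp.1, j)) ro.2 sp.2.

Definition completely_positive I O (M : opmap I O) : Prop :=
  forall (n : nat) (X : op ('I_n * I)%type), psd X -> psd (ampl M X).

Definition trace_preserving I O (M : opmap I O) : Prop :=
  forall X : op I, trace (M X) = trace X.

Definition channel I O (M : opmap I O) : Prop :=
  [/\ linear_map M, completely_positive M & trace_preserving M].

Definition eunit (T : finType) (i j : T) : op T :=
  fun k l => ((k == i) && (l == j))%:R.

(* Unnormalized Choi operator J_{AB A'B'} = sum_{ij} |i><j| (x) M(|i><j|) *)
Definition choi I O (M : opmap I O) : op (I * O)%type :=
  fun x y => M (eunit x.1 y.1) x.2 y.2.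

Variables (A B A' B' : finType).
Local Notation AB := (A * B)%type.
Local Notation A'B' := (A' * B')%type.

Definition ptB (X : op AB) : op AB :=
  fun x y => X (x.1, y.2) (y.1, x.2).

Definition ptBB' (X : op (AB * A'B')%type) : op (AB * A'B')%type :=
  fun x y => X ((x.1.1, y.1.2), (x.2.1, y.2.2)) ((y.1.1, x.1.2), (y.2.1, x.2.2)).

Definition ptrace2 (X : op (AB * A'B')%type) : op AB :=
  fun i j => \sum_o X (i, o) (j, o).

Definition ppt_channel (M : opmap AB A'B') : Prop :=
  channel M /\ psd (ptBB' (choi M)).

Local Open Scope ereal_scope.

Definition gamma_PPT (N : opmap AB A'B') : \bar R :=
  ereal_inf [set x : \bar R | exists c1 c2 : R,
     [/\ (0 <= c1)%R, (0 <= c2)%R,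
        exists M1 M2 : opmap AB A'B', [/\ ppt_channel M1, ppt_channel M2 &
          forall X, N X = opadd (opscale (c1%:C) (M1 X)) (opopp (opscale (c2%:C) (M2 X)))]
      & x = ((c1 + c2)%R)%:E]].

(* the quantity 2^{LN_max(N)}: infimum of max{||P_AB||, ||P_AB^{T_B}||} *)
Definition LNmax_set (N : opmap AB A'B') : set R :=
  [set t : R | exists P : op (AB * A'B')%type,
      [/\ psd P,
          loewner (opopp (ptBB' P)) (ptBB' (choi N)),
          loewner (ptBB' (choi N)) (ptBB' P) &
          t = Num.max (opnorm (ptrace2 P)) (opnorm (ptB (ptrace2 P)))]].

Definition log2 (x : R) : R := (ln x / ln 2)%R.

Definition LNmax (N : opmap AB A'B') : \bar R :=
  match ereal_inf [set t%:E | t in LNmax_set N] with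
  | r%:E => (log2 r)%:E
  | +oo => +oo
  | -oo => -oo
  end.

End QDefs.

Local Open Scope ereal_scope.
Definition exp2e (R : realType) (x : \bar R) : \bar R :=
  match x with
  | r%:E => (2 `^ r)%R%:E
  | +oo => +oo
  | -oo => 0
  end.

(* Main.v *)
Require Import Defs.
From HB Require Import structures.
From mathcomp Require Import all_boot all_order all_algebra.
From mathcomp Require Import complex.
From mathcomp Require Import all_classical all_reals ereal exp.
From mathcomp Require Import ring lra.
Import Order.TTheory GRing.Theory Num.Theory.
Local Open Scope ring_scope.
Local Open Scope complex_scope.

Section H.
Variable R : realType.
Local Notation C := R[i].

Lemma psd_ext T (X Y : op R T) : (forall i j, X i j = Y i j) -> psd X -> psd Y.
Proof.
move=> e; have -> : Y = X; last by [].
by apply/funext=> i; apply/funext=> j; rewrite e.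
Qed.

Lemma psd_scale T (c : C) (X : op R T) : 0 <= c -> psd X -> psd (opscale c X).
Proof.
move=> c0 pX v.
have -> : \sum_i \sum_j (v i)^* * opscale c X i j * v j
   = c * \sum_i \sum_j (v i)^* * X i j * v j.
  rewrite mulr_sumr; apply: eq_bigr => i _.
  rewrite mulr_sumr; apply: eq_bigr => j _.
  rewrite /opscale; ring.
exact: mulr_ge0.
Qed.

Lemma psd_add T (X Y : op R T) : psd X -> psd Y -> psd (opadd X Y).
Proof.
move=> pX pY v.
have -> : \sum_i \sum_j (v i)^* * opadd X Y i j * v j
   = \sum_i \sum_j (v i)^* * X i j * v j + \sum_i \sum_j (v i)^* * Y i j * v j.
  rewrite -big_split; apply: eq_bigr => i _.
  rewrite -big_split; apply: eq_bigr => j _.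
  rewrite /opadd /=; ring.
exact: addr_ge0.
Qed.

Lemma choi_psd I O (M : opmap R I O) : completely_positive M -> psd (choi M).
Proof.
move=> cp v.
pose f (x : 'I_#|I| * I) : C := (x.1 == enum_rank x.2)%:R.
pose X : op R ('I_#|I| * I)%type := fun x y => f x * f y.
have pX : psd X.
  move=> w.
  have -> : \sum_i \sum_j (w i)^* * X i j * w j
      = (\sum_i f i * w i)^* * (\sum_j f j * w j).
    rewrite rmorph_sum big_distrl /=; apply: eq_bigr => i _.
    rewrite big_distrr /=; apply: eq_bigr => j _.
    rewrite rmorphM /= /f rmorph_nat /X /f; ring.
  by rewrite mulrC -sqr_normc exprn_ge0 // normr_ge0.
have := cp _ X pX (fun x => v (enum_val x.1, x.2)).
pose h : 'I_#|I| * O -> I * O := fun x => (enum_val x.1, x.2).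
have hb : bijective h.
  by exists (fun x => (enum_rank x.1, x.2)) => [[a b]|[a b]] /=;
    rewrite /h /= ?enum_valK ?enum_rankK.
have e : forall F : I * O -> C, \sum_(x : I * O) F x = \sum_(x : 'I_#|I| * O) F (h x).
  by move=> F; rewrite (reindex h) //; exact: onW_bij.
have ev : forall (a : 'I_#|I|) (i : I), (i == enum_val a) = (a == enum_rank i).
  by move=> a i; apply/eqP/eqP => [->|->]; rewrite ?enum_valK ?enum_rankK.
have cE : forall x y, choi M (h x) (h y) = ampl M X x y.
  move=> [a o] [b p]; rewrite /choi /ampl /h /=.
  congr (M _ o p); apply/funext=> i; apply/funext=> j.
  by rewrite /eunit /X /f /= -natrM mulnb !ev.
rewrite (reindex h (onW_bij _ hb)); under eq_bigr do rewrite (reindex h (onW_bij _ hb)).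
under eq_bigr => x _ do under eq_bigr => y _ do rewrite cE.
by [].
Qed.

Lemma trace_eunit I O (M : opmap R I O) : trace_preserving M ->
  forall i j, \sum_o M (eunit R i j) o o = (i == j)%:R.
Proof.
move=> tp i j; have := tp (eunit R i j); rewrite /trace => ->; rewrite /eunit.
case: (eqVneq i j) => [<-|ne].
  rewrite (bigD1 i) //= eqxx big1 ?addr0 // => k /negbTE ->; by [].
rewrite big1 // => k _.
have -> : ((k == i) && (k == j)) = false.
  by apply/negbTE/negP => /andP [/eqP -> /eqP]; apply/eqP.
by [].
Qed.

Lemma opnorm_diag T (k : R) (X : op R T) : (0 <= k)%R ->
  (forall i j, X i j = k%:C * (i == j)%:R) -> (opnorm X <= k)%R.
Proof.
move=> k0 e.
apply: ge_inf; first by exists 0%R => c [].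
split => // v.
have ap : forall i, opapply X v i = k%:C * v i.
  move=> i; rewrite /opapply (bigD1 i) //= e eqxx big1 ?addr0 ?mulr1 // => j /negbTE ji.
  by rewrite e eq_sym ji mulr0 mul0r.
rewrite /vnormsq mulr_sumr le_eqVlt; apply/orP; left; apply/eqP.
apply: eq_bigr => i _; rewrite ap normrM exprMn ger0_norm //.
by rewrite lecR.
Qed.
End H.

Local Close Scope complex_scope.
Local Open Scope complex_scope.
Local Open Scope ereal_scope.
Theorem lemma1 (R : realType) (A B A' B' : finType)
    (N : opmap R (A * B)%type (A' * B')%type) :
  channel N ->
  gamma_PPT N >= exp2e (LNmax N) - 1%:E.
Proof.
move=> chN; rewrite /gamma_PPT; apply/ereal_infP => y
  [c1 [c2 [c10 c20 [M1 [M2 [[ch1 ppt1] [ch2 ppt2] eqN]]] ->]]].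
case: ch1 => _ cp1 tp1; case: ch2 => _ cp2 tp2.
pose P := opadd (opscale c1%:C (choi M1)) (opscale c2%:C (choi M2)).
have c10' : (0 <= c1%:C)%R by rewrite lecR.
have c20' : (0 <= c2%:C)%R by rewrite lecR.
have trP : forall i j, (ptrace2 P i j = (c1 + c2)%:C * (i == j)%:R)%R.
  move=> i j; rewrite /ptrace2 /P /opadd /opscale /= big_split /= -!mulr_sumr.
  rewrite /choi /=.
  rewrite (@trace_eunit R _ _ M1 tp1) (@trace_eunit R _ _ M2 tp2) rmorphD /=; ring.
pose t := Num.max (opnorm (ptrace2 P)) (opnorm (ptB (ptrace2 P))).
have tin : LNmax_set N t.
  exists P; split => //.
  - by apply: psd_add; apply: psd_scale => //; apply: choi_psd.
  - apply: (@psd_ext R _ (opscale (c1%:C * 2)%R (ptBB' (choi M1)))).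
      move=> i j; rewrite /opadd /opopp /opscale /ptBB' /P /choi /= eqN /opadd /opopp /opscale /=; ring.
    by apply: psd_scale => //; rewrite mulr_ge0.
  - apply: (@psd_ext R _ (opscale (c2%:C * 2)%R (ptBB' (choi M2)))).
      move=> i j; rewrite /opadd /opopp /opscale /ptBB' /P /choi /= eqN /opadd /opopp /opscale /=; ring.
    by apply: psd_scale => //; rewrite mulr_ge0.
have tle : (t <= c1 + c2)%R.
  rewrite /t ge_max; apply/andP; split; apply: opnorm_diag; rewrite ?addr_ge0 //.
  move=> [a b] [a' b']; rewrite /ptB /= trP; congr (_ * _%:R)%R.
  by rewrite !xpair_eqE (eq_sym b').
have := @ereal_inf_lbound R [set t%:E | t in LNmax_set N] t%:E (ex_intro2 _ _ t tin erefl).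
rewrite /LNmax; case: ereal_inf => [r| |] /=.
- rewrite lee_fin -EFinB lee_fin => rt.
  have [r0|r0] := ltP 0%R r.
    have l2 : (ln (2:R) != 0)%R by rewrite gt_eqF // ln_gt0 // ltr1n.
    have -> : (2 `^ log2 r = r)%R.
      rewrite /powR /log2 ifF; last by rewrite pnatr_eq0.
      by rewrite divfK // lnK.
    lra.
  rewrite /log2 ln0 // mul0r powRr0; lra.
- by rewrite leye_eq.
- move=> _ /=. rewrite add0e lee_fin; lra.
Qed.
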